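(* Let $n\ge 1$ and let $K=(\beta(\mathbb{Z}^n)\times \mathbb{I}^n)/h$, with $\mathbb{I}=[0,1]$ and $h$ the equivalence relation described in the context. Define $\sigma:\mathbb{R}^n\times K\to K$ by $$\sigma\big(\vec{x},[(p,\vec{i})]_h\big)=\big[\big(h_{[\vec{x}]+N}(p),\ \vec{i}+\{\vec{x}\}-N\big)\big]_h,$$ where $[\vec{x}]\in\mathbb{Z}^n$ is the coordinatewise integer part of $\vec{x}$, $\{\vec{x}\}=\vec{x}-[\vec{x}]\in[0,1)^n$, and $N\in\{0,1\}^n$ has $N_k=1$ if $i_k+\{\vec{x}\}_k\ge 1$ and $N_k=0$ otherwise. Then $\big(\mathbb{R}^n, K, \sigma; [(0,\mathbf{0})]_h\big)$ is an ambit, i.e. $\sigma$ is a well-defined continuous action of the additive group $\mathbb{R}^n$ (Euclidean topology) on the compact Hausdorff space $K$, and the orbit of $[(0,\mathbf{0})]_h$ (with $0\in\mathbb{Z}^n\subseteq\beta(\mathbb{Z}^n)$ and $\mathbf{0}$ the zero vector of $\mathbb{I}^n$) is dense in $K$.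
   Context: $\beta(\mathbb{Z}^n)$ is the Čech–Stone compactification of the discrete group $\mathbb{Z}^n$. For $N\in\mathbb{Z}^n$, $h_N:\beta(\mathbb{Z}^n)\to\beta(\mathbb{Z}^n)$ denotes the continuous extension of the translation $\vec{z}\mapsto\vec{z}+N$ of $\mathbb{Z}^n$; write $h_1,\dots,h_n$ for $h_{e_1},\dots,h_{e_n}$. For $A\subseteq\{1,\dots,n\}$ let $\mathbf{1}_A\in\{0,1\}^n$ be its indicator vector, and for $\vec{i}\in\mathbb{I}^n$ let $\psi_A(\vec{i})$ be obtained from $\vec{i}$ by changing, for each $a\in A$, the coordinate $i_a$ to $0$ if $i_a=1$ and to $1$ if $i_a=0$. The equivalence relation $h$ on $\beta(\mathbb{Z}^n)\times\mathbb{I}^n$ identifies $(p,\vec{i})$ with $(h_{\mathbf{1}_A}(p),\psi_A(\vec{i}))$ whenever $A\subseteq\{j: i_j=1\}$ (and hence, symmetrically, identifies $(p,\vec i)$ with $(h_{-\mathbf{1}_B}(p),\psi_B(\vec i))$ for $B\subseteq\{j:i_j=0\}$); $[\cdot]_h$ denotes equivalence classes. Restricted to $\mathbb{Z}^n\times\mathbb{I}^n$ the quotient is homeomorphic to $\mathbb{R}^n$ via $[(\vec z,\vec i)]_h\mapsto \vec z+\vec i$. A dynamical system $(G,X,\pi)$ is a topological group $G$ acting continuously on a compact Hausdorff space $X$; an ambit $(G,X,\pi;x)$ is a dynamical system together with a point $x$ whose orbit $\{\pi(g,x):g\in G\}$ is dense in $X$. *)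

(* Defs.v *)
From HB Require Import structures.
From Stdlib Require Import Relations.
From mathcomp Require Import all_boot all_order all_algebra.
From mathcomp Require Import all_classical all_reals all_analysis.
Set Implicit Arguments. Unset Strict Implicit. Unset Printing Implicit Defensive.
Import Order.TTheory GRing.Theory Num.Theory.
Import numFieldNormedType.Exports.
Local Open Scope classical_set_scope.
Local Open Scope ring_scope.

(* Z^n is 'rV[int]_n (discrete), R^n is 'rV[R]_n (product = Euclidean topology). *)

Definition is_stone_cech (X : Type) (B : topologicalType) (e : X -> B) : Prop :=
  [/\ compact [set: B], hausdorff_space B, injective e,
      dense (range e) &
      forall (Y : topologicalType), compact [set: Y] -> hausdorff_space Y ->
        forall f : X -> Y, exists g : B -> Y, continuous g /\ g \o e = f].

Definition ind_vec (n : nat) (A : {set 'I_n}) : 'rV[int]_n :=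
  \row_j (j \in A)%:Z.

Definition psi (R : realType) (n : nat) (A : {set 'I_n}) (i : 'rV[R]_n) : 'rV[R]_n :=
  \row_j (if j \in A then 1 - i 0 j else i 0 j).

Definition cube (R : realType) (n : nat) : set 'rV[R]_n :=
  [set i | forall j, 0 <= i 0 j <= 1].

Definition h_basic (R : realType) (n : nat) (B : Type)
  (hN : 'rV[int]_n -> B -> B) : relation (B * 'rV[R]_n) :=
  fun z w => exists A : {set 'I_n},
    (forall j, j \in A -> z.2 0 j = 1) /\ w.1 = hN (ind_vec A) z.1 /\ w.2 = psi A z.2.

Definition h_rel (R : realType) (n : nat) (B : Type)
  (hN : 'rV[int]_n -> B -> B) : relation (B * 'rV[R]_n) :=
  clos_refl_sym_trans _ (h_basic hN).

Definition ipart (R : realType) (n : nat) (x : 'rV[R]_n) : 'rV[int]_n :=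
  \row_j Num.floor (x 0 j).
Definition fpart (R : realType) (n : nat) (x : 'rV[R]_n) : 'rV[R]_n :=
  x - map_mx (fun z : int => z%:~R) (ipart x).
Definition carry (R : realType) (n : nat) (x i : 'rV[R]_n) : 'rV[int]_n :=
  \row_j (1 <= i 0 j + fpart x 0 j)%R%:Z.

(* K is the quotient (B x I^n)/h with quotient map q: q is onto K from
   B x I^n, identifies exactly h-equivalent points, and K carries the quotient
   topology of the subspace B x I^n of B x R^n. *)
Definition is_h_quotient (R : realType) (n : nat) (B : topologicalType)
  (hN : 'rV[int]_n -> B -> B) (K : topologicalType) (q : B * 'rV[R]_n -> K) : Prop :=
  let D := [set z : B * 'rV[R]_n | cube z.2] in
  [/\ (forall k : K, exists2 z, D z & q z = k),
      (forall z w, D z -> D w -> (q z = q w <-> h_rel hN z w)) &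
      (forall U : set K, open U <->
         exists V : set (B * 'rV[R]_n), open V /\ V `&` D = D `&` (q @^-1` U))].

(* Main.v *)
Require Import Defs.
From Stdlib Require Import Relations.
From mathcomp Require Import all_boot all_order all_algebra.
From mathcomp Require Import all_classical all_reals all_analysis.
From mathcomp Require Import lra zify.
Import Order.TTheory GRing.Theory Num.Theory.
Import numFieldNormedType.Exports.
Local Open Scope classical_set_scope.
Local Open Scope ring_scope.

Section Main.
Variables (R : realType) (n : nat) (B : topologicalType) (e : 'rV[int]_n -> B)
  (hN : 'rV[int]_n -> B -> B) (K : topologicalType) (q : B * 'rV[R]_n -> K).
Hypotheses (He : is_stone_cech e) (HhN : forall N, continuous (hN N))
  (Hhe : forall N z, hN N (e z) = e (z + N)) (Hq : is_h_quotient hN q).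

Lemma eq_dense_cont (Y : topologicalType) (f g : B -> Y) :
  hausdorff_space Y -> continuous f -> continuous g ->
  (forall z, f (e z) = g (e z)) -> forall p, f p = g p.
Proof.
move=> hY cf cg fg p; apply: hY => A C nA nC.
have nS : nbhs p (f @^-1` A `&` g @^-1` C).
  by apply: filterI; [exact: cf | exact: cg].
have : exists2 W, open_nbhs p W & W `<=` (f @^-1` A `&` g @^-1` C).
  by move: nS; rewrite nbhsE.
case=> W0 [oW Wp] WS.
case: He => _ _ _ dE _.
have [x [Wx [z _ ezx]]] := dE W0 (ex_intro _ p Wp) oW.
have [Ax Cx] := WS x Wx.
exists (f x); split => //; rewrite -ezx fg; rewrite -ezx in Cx; exact: Cx.
Qed.


Lemma B_hausdorff : hausdorff_space B.
Proof. by case: He. Qed.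

Lemma hN0 p : hN 0 p = p.
Proof.
have := @eq_dense_cont B (hN 0) id B_hausdorff (HhN 0).
apply => //; first by move=> x; exact: cvg_id.
by move=> z; rewrite Hhe addr0.
Qed.

Lemma hNA a b p : hN a (hN b p) = hN (b + a) p.
Proof.
apply: (@eq_dense_cont B (hN a \o hN b) (hN (b + a)) B_hausdorff) => //.
- by move=> x; apply: continuous_comp; [exact: HhN | exact: HhN].
- by move=> z /=; rewrite !Hhe addrA.
Qed.

Local Notation ic v := (map_mx (fun z : int => z%:~R : R) v).

Lemma icD (a b : 'rV[int]_n) : ic (a + b) = ic a + ic b.
Proof. by apply/rowP => j; rewrite !mxE intrD. Qed.
Lemma icB (a b : 'rV[int]_n) : ic (a - b) = ic a - ic b.
Proof. by apply/rowP => j; rewrite !mxE intrB. Qed.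
Lemma ic0 : ic 0 = 0 :> 'rV[R]_n.
Proof. by apply/rowP => j; rewrite !mxE. Qed.

Lemma psiE (A : {set 'I_n}) (t : 'rV[R]_n) :
  (forall j, j \in A -> t 0 j = 1) -> psi A t = t - ic (ind_vec A).
Proof.
move=> H; apply/rowP => j; rewrite !mxE; case: ifP => jA.
  by rewrite H.
by rewrite subr0.
Qed.

Lemma cube_basic (z w : B * 'rV[R]_n) : h_basic hN z w -> (cube z.2 <-> cube w.2).
Proof.
case=> A [H [_ ->]]; split => cz j; have := cz j; rewrite !mxE;
  case: ifP => // jA; by rewrite H // subrr ?lexx ?ler01.
Qed.

Lemma cube_rel (z w : B * 'rV[R]_n) : h_rel hN z w -> (cube z.2 <-> cube w.2).
Proof.
elim=> [x y /cube_basic //| x | x y _ [h1 h2] | x y z' _ [h1 h2] _ [h3 h4]];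
  split; by auto.
Qed.

Lemma q_surj (k : K) : exists2 z, cube z.2 & q z = k.
Proof. by case: Hq => H _ _; apply: H. Qed.

Lemma q_eq (z w : B * 'rV[R]_n) : cube z.2 -> cube w.2 -> (q z = q w <-> h_rel hN z w).
Proof. by case: Hq => _ H _; apply: H. Qed.

Lemma q_open (U : set K) : open U <->
  exists V : set (B * 'rV[R]_n), open V /\ V `&` [set z | cube z.2] = [set z | cube z.2] `&` (q @^-1` U).
Proof. by case: Hq => _ _ H; apply: H. Qed.

Lemma qQ p t (c : 'rV[int]_n) : cube t -> cube (t - ic c) ->
  q (p, t) = q (hN c p, t - ic c).
Proof.
move=> ct ctc.
have hc : forall j, c 0 j = -1 \/ c 0 j = 0 \/ c 0 j = 1.
  move=> j; have /andP[t0 t1] := ct j; have := ctc j; rewrite !mxE => /andP[u0 u1].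
  have h1 : c 0 j <= 1 by rewrite -(ler_int R); lra.
  have h2 : -1 <= c 0 j by rewrite -(ler_int R) intrN; lra.
  move=> {t0 t1 u0 u1}.
  lia.
pose A : {set 'I_n} := finset (fun j => c 0 j == 1).
pose Bs : {set 'I_n} := finset (fun j => c 0 j == -1).
have cAB : c = ind_vec A - ind_vec Bs.
  apply/rowP => j; rewrite !mxE !inE.
  by case: (hc j) => [->|[->|->]].
have tA : forall j, j \in A -> t 0 j = 1.
  move=> j; rewrite inE => /eqP cj; have := ctc j; rewrite !mxE cj => /andP[u0 _].
  have /andP[_ t1] := ct j; lra.
have tB : forall j, j \in Bs -> (t - ic c) 0 j = 1.
  move=> j; rewrite inE => /eqP cj; have := ct j; rewrite !mxE cj => /andP[t0 _].
  have := ctc j; rewrite !mxE cj => /andP[_ u1].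
  move: t0 u1; rewrite intrN; lra.
have m1 : h_basic hN (p, t) (hN (ind_vec A) p, psi A t) by exists A.
have m2 : h_basic hN (hN c p, t - ic c) (hN (ind_vec A) p, psi A t).
  exists Bs; split => //; split => /=.
    by rewrite hNA cAB subrK.
  by rewrite psiE // psiE // -addrA -opprD -icD cAB subrK.
apply/(@q_eq (p, t) (hN c p, t - ic c) ct ctc).
apply: rst_trans; first exact: rst_step m1.
exact/rst_sym/rst_step.
Qed.


Lemma cube_fpart (t : 'rV[R]_n) : cube (fpart t).
Proof.
move=> j; rewrite !mxE; have /andP[h1 h2] := floor_itv (t 0 j).
rewrite intrD in h2; apply/andP; split; lra.
Qed.

Lemma fpart_lt1 (t : 'rV[R]_n) j : fpart t 0 j < 1.
Proof.
rewrite !mxE; have /andP[h1 h2] := floor_itv (t 0 j).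
rewrite intrD in h2; lra.
Qed.

Lemma chart p t a b : cube (t - ic a) -> cube (t - ic b) ->
  q (hN a p, t - ic a) = q (hN b p, t - ic b).
Proof.
move=> ca cb; rewrite (qQ (hN a p) (t - ic a) (b - a)) //.
  by rewrite hNA (addrC a) subrK icB opprB addrA subrK.
by rewrite icB opprB addrA subrK.
Qed.

Definition pi (z : B * 'rV[R]_n) : K := q (hN (ipart z.2) z.1, fpart z.2).

Lemma pi_chart p t a : cube (t - ic a) -> pi (p, t) = q (hN a p, t - ic a).
Proof. by move=> ca; rewrite /pi /=; apply: chart => //; exact: cube_fpart. Qed.

Lemma pi_shift p t b : pi (hN b p, t - ic b) = pi (p, t).
Proof.
rewrite (pi_chart p t (b + ipart (t - ic b))).
  by rewrite /pi /= hNA /fpart icD opprD addrA.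
by rewrite icD opprD addrA; exact: cube_fpart.
Qed.

Lemma pi_q z : cube z.2 -> pi z = q z.
Proof. by case: z => p t /= ct; rewrite (pi_chart p t 0) ?ic0 ?subr0 ?hN0. Qed.

Lemma pi_rel (z w : B * 'rV[R]_n) : h_rel hN z w ->
  forall x, pi (z.1, z.2 + x) = pi (w.1, w.2 + x).
Proof.
elim=> [{}z {}w [A [H [-> ->]]] | // | {}z {}w _ IH | {}z {}w y _ IH1 _ IH2] x.
- by rewrite psiE // addrAC pi_shift.
- by rewrite IH.
- by rewrite IH1 IH2.
Qed.

Definition rep (k : K) : B * 'rV[R]_n := s2val (cid2 (q_surj k)).
Lemma rep_cube k : cube (rep k).2.
Proof. by rewrite /rep; case: cid2. Qed.
Lemma rep_q k : q (rep k) = k.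
Proof. by rewrite /rep; case: cid2. Qed.

Definition sigma (x : 'rV[R]_n) (k : K) : K := pi ((rep k).1, (rep k).2 + x).

Lemma sigma_q x z : cube z.2 -> sigma x (q z) = pi (z.1, z.2 + x).
Proof.
move=> cz; rewrite /sigma; apply: pi_rel.
by apply/q_eq; [exact: rep_cube | exact: cz | rewrite rep_q].
Qed.

Lemma carry_aux (a y F : R) (bb : bool) : 0 <= a <= 1 -> 0 <= y - F < 1 ->
  bb = (1 <= a + (y - F)) -> 0 <= a + y + (- F - ((bb : nat) : int)%:~R) <= 1.
Proof.
move=> /andP[a0 a1] hf; case/andP: hf => f0 f1 ->; case: (lerP 1 (a + (y - F))) => h /=; apply/andP; split; lra.
Qed.

Lemma sigma_formula (x : 'rV[R]_n) (p : B) (i : 'rV[R]_n) : cube i ->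
  sigma x (q (p, i)) =
  q (hN (ipart x + carry x i) p, i + fpart x - ic (carry x i)).
Proof.
move=> ci; rewrite sigma_q //= (pi_chart p (i + x) (ipart x + carry x i)).
  by rewrite /fpart icD opprD !addrA.
rewrite icD opprD addrA -addrA -/(fpart x) => j.
have := ci j; have := fpart_lt1 x j; have := cube_fpart x j.
rewrite !mxE => /andP[f0 _] f1 /andP[i0 i1].
by apply: carry_aux => //; rewrite f0 f1.
Qed.

Lemma sigma0 k : sigma 0 k = k.
Proof.
rewrite /sigma addr0.
have -> : ((rep k).1, (rep k).2) = rep k by case: (rep k).
by rewrite pi_q ?rep_q //; exact: rep_cube.
Qed.

Lemma sigmaD x y k : sigma (x + y) k = sigma x (sigma y k).
Proof.
have -> : sigma y k = q (hN (ipart ((rep k).2 + y)) (rep k).1, fpart ((rep k).2 + y)) by [].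
rewrite sigma_q /=; last exact: cube_fpart.
by rewrite /fpart addrAC pi_shift /sigma (addrC x) addrA.
Qed.


Definition Dset : set (B * 'rV[R]_n) := [set z | cube z.2].

Lemma cube_compact : compact [set t : 'rV[R]_n | cube t].
Proof.
have -> : [set t : 'rV[R]_n | cube t] = [set v : 'rV[R]_n | forall i, [set` `[(0:R), 1]] (v ord0 i)].
  by apply/seteqP; split => v /= H i; have := H i; rewrite /= in_itv.
by apply: (@rV_compact R n (fun _ => [set` `[(0:R), 1]])) => i; exact: segment_compact.
Qed.

Lemma D_compact : compact Dset.
Proof.
have -> : Dset = [set: B] `*` [set t : 'rV[R]_n | cube t].
  by apply/seteqP; split => z /=; [move=> h; split | case].
by apply: compact_setX; [case: He | exact: cube_compact].
Qed.

Lemma K_compact : compact [set: K].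
Proof.
move=> F PF _.
have PG : ProperFilter (rep @ F) by exact: fmap_proper_filter.
have GD : F (rep @^-1` Dset).
  by apply: filterS (@filterT _ F _) => k _; exact: rep_cube.
have [z [Dz cz]] := @D_compact (rep @ F) PG GD.
exists (q z); split => // A C FA nC.
have : exists2 U, open_nbhs (q z) U & U `<=` C by move: nC; rewrite nbhsE.
case=> U [oU Uz] UC.
have [V [oV VD]] := (q_open U).1 oU.
have Vz : V z.
  have : (Dset `&` (q @^-1` U)) z by split.
  by rewrite -VD => -[].
have nV : nbhs z V by apply: open_nbhs_nbhs.
have GA : F (rep @^-1` (rep @` A)) by apply: filterS FA => k Ak; exists k.
have [w [[k Ak <-] Vk]] := cz _ _ GA nV.
exists k; split => //; apply: UC.
have : (V `&` Dset) (rep k) by split => //; exact: rep_cube.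
by rewrite VD => -[_ /=]; rewrite rep_q.
Qed.

Lemma orbit_dense : closure (range (fun x => sigma x (q (e 0, 0)))) = [set: K].
Proof.
apply/seteqP; split => // k _ C nC.
have : exists2 U, open_nbhs k U & U `<=` C by move: nC; rewrite nbhsE.
case=> U [oU Uk] UC.
have [V [oV VD]] := (q_open U).1 oU.
have Vr : V (rep k).
  have : (Dset `&` (q @^-1` U)) (rep k) by split; [exact: rep_cube | rewrite /= rep_q].
  by rewrite -VD => -[].
have : nbhs (rep k) V by apply: open_nbhs_nbhs.
case=> -[N1 N2] /= [n1 n2] N12.
have : exists2 W, open_nbhs (rep k).1 W & W `<=` N1 by move: n1; rewrite nbhsE.
case=> W [oW Wp] WN.
case: He => _ _ _ dE _.
have [x [Wx [z _ ezx]]] := dE W (ex_intro _ _ Wp) oW.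
have Dz : Dset (e z, (rep k).2) by exact: rep_cube.
have Vz : V (e z, (rep k).2) by apply: N12; split => /=; [rewrite ezx; exact: WN | exact: nbhs_singleton].
have Uz : U (q (e z, (rep k).2)).
  have : (V `&` Dset) (e z, (rep k).2) by [].
  by rewrite VD => -[].
exists (q (e z, (rep k).2)); split; last exact: UC.
exists (ic z + (rep k).2) => //.
rewrite sigma_q /=; last by move=> j; rewrite !mxE lexx ler01.
rewrite add0r (pi_chart _ _ z); last by rewrite (addrC (ic z)) addrK; exact: rep_cube.
by rewrite Hhe add0r (addrC (ic z)) addrK.
Qed.


Lemma cube_closed : closed [set t : 'rV[R]_n | cube t].
Proof. apply: compact_closed; [exact: (@norm_hausdorff R 'rV[R]_n) | exact: cube_compact]. Qed.

Lemma near_coord (t0 : 'rV[R]_n) j (P : R -> Prop) :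
  nbhs (t0 0 j) P -> nbhs t0 (fun t : 'rV[R]_n => P (t 0 j)).
Proof. by move=> h; exact: (@coord_continuous R 1 n 0 j t0 _ h). Qed.

Lemma near_snd (z0 : B * 'rV[R]_n) (P : 'rV[R]_n -> Prop) :
  nbhs z0.2 P -> nbhs z0 (fun z => P z.2).
Proof.
move=> h; exists (setT, P); first by split => //; exact: filterT.
by move=> [x y] [].
Qed.

Definition psi_ch (a : 'rV[int]_n) (z : B * 'rV[R]_n) := (hN a z.1, z.2 - ic a).

Lemma snd_cvg a (z0 : B * 'rV[R]_n) :
  (fun z : B * 'rV[R]_n => z.2 - ic a) @ nbhs z0 --> z0.2 - ic a.
Proof. by apply: cvgB; [exact: cvg_snd | exact: cvg_cst]. Qed.

Lemma psi_ch_near a z0 (V : set (B * 'rV[R]_n)) : open V -> V (psi_ch a z0) ->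
  \forall z \near z0, V (psi_ch a z).
Proof.
move=> oV Vz.
have c1 : (fun z : B * 'rV[R]_n => hN a z.1) @ nbhs z0 --> hN a z0.1.
  by apply: (cvg_comp _ _ cvg_fst); exact: HhN.
have c2 := snd_cvg a z0.
exact: (@cvg_pair _ _ _ _ _ _ _ _ _ _ _ c1 c2 V (open_nbhs_nbhs (conj oV Vz))).
Qed.

Lemma chart_aux (t t0 : R) (F : int) (bb : bool) : F%:~R <= t0 -> t0 - 1 < t -> t < F%:~R + 1 ->
  bb = (t < F%:~R) -> 0 <= t - (F - (bb : nat)%:Z)%:~R <= 1.
Proof.
move=> h1 h2 h3 ->; rewrite intrB; case: (ltrP t F%:~R) => h /=; apply/andP; split; lra.
Qed.

Lemma pi_cont : continuous pi.
Proof.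
move=> z0 C nC.
have : exists2 U, open_nbhs (pi z0) U & U `<=` C by move: nC; rewrite nbhsE.
case=> U [oU Uz] UC.
have [V [oV VD]] := (q_open U).1 oU.
pose f0 := ipart z0.2.
pose a (E : {set 'I_n}) := f0 - ind_vec E.
have H1 : \forall z \near z0, forall E, cube (z.2 - ic (a E)) -> V (psi_ch (a E) z).
  apply: (@filter_forall _ {set 'I_n}
    (fun E (z : B * 'rV[R]_n) => cube (z.2 - ic (a E)) -> V (psi_ch (a E) z)) (nbhs z0) _) => E.
  have [c0|nc0] := pselect (cube (z0.2 - ic (a E))).
    have Vz0 : V (psi_ch (a E) z0).
      have : (Dset `&` (q @^-1` U)) (psi_ch (a E) z0).
        split => //=; rewrite -(pi_chart z0.1 z0.2 (a E)) //.
      by rewrite -VD => -[].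
    by move: (psi_ch_near (a E) z0 V oV Vz0); apply: filterS => z h _.
  have oC : open (~` [set t : 'rV[R]_n | cube t]) by exact: closed_openC cube_closed.
  have h := snd_cvg (a E) z0 _ (open_nbhs_nbhs (conj oC nc0)).
  apply: (@filterS _ (nbhs z0) _ ((fun z : B * 'rV[R]_n => z.2 - ic (a E)) @^-1` (~` [set t | cube t])) _ _ h).
  by move=> z /= h1 /h1.
have H2 : \forall z \near z0, exists E, cube (z.2 - ic (a E)).
  apply: (near_snd z0 (fun t => exists E, cube (t - ic (a E)))).
  have : nbhs z0.2 (fun t : 'rV[R]_n => forall j, z0.2 0 j - 1 < t 0 j /\ t 0 j < (f0 0 j)%:~R + 1).
    apply: (@filter_forall _ 'I_n
      (fun j (t : 'rV[R]_n) => z0.2 0 j - 1 < t 0 j /\ t 0 j < (f0 0 j)%:~R + 1) (nbhs z0.2) _) => j.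
    apply: (near_coord z0.2 j (fun y => z0.2 0 j - 1 < y /\ y < (f0 0 j)%:~R + 1)).
    apply: filterI.
      by apply: lt_nbhsr; rewrite ltrBlDr ltrDl.
    apply: lt_nbhsl; rewrite /f0 mxE -intrD1 //; exact: floorD1_gt.
  apply: filterS => t h; exists (finset (fun j => t 0 j < (f0 0 j)%:~R)) => j.
  have [h2 h3] := h j; rewrite !mxE inE.
  rewrite /f0 mxE in h3.
  apply: (chart_aux _ (z0.2 0 j)) => //; last by rewrite /f0 mxE.
  exact: floor_le.
apply: filterS2 H1 H2 => -[p t] h1 [E cE]; apply: UC.
have : (V `&` Dset) (psi_ch (a E) (p, t)) by split; [exact: h1 | exact: cE].
by rewrite VD => -[_ /=]; rewrite (pi_chart p t (a E)).
Qed.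


Lemma shift_cont (s : 'rV[R]_n) : continuous (fun z : B * 'rV[R]_n => pi (z.1, z.2 + s)).
Proof.
move=> z0.
have c1 : (fun z : B * 'rV[R]_n => z.1) @ nbhs z0 --> z0.1 by exact: cvg_fst.
have c2 : (fun z : B * 'rV[R]_n => z.2 + s) @ nbhs z0 --> z0.2 + s.
  by apply: cvgD; [exact: cvg_snd | exact: cvg_cst].
have c : (fun z : B * 'rV[R]_n => (z.1, z.2 + s)) @ nbhs z0 --> (z0.1, z0.2 + s).
  exact: (@cvg_pair _ _ _ _ _ _ _ _ _ _ _ c1 c2).
exact: (continuous_comp c (pi_cont _)).
Qed.

Lemma sigma_cont (s : 'rV[R]_n) : continuous (sigma s).
Proof.
apply/continuousP => U oU; apply/q_open.
exists ((fun z : B * 'rV[R]_n => pi (z.1, z.2 + s)) @^-1` U); split.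
  by move/continuousP: (shift_cont s); apply.
apply/seteqP; split => z [h1 h2]; split => //=.
  by rewrite (sigma_q s z h2).
by move: h2; rewrite /= (sigma_q s z h1).
Qed.

Lemma cluster_map (T : topologicalType) (F : K -> T) (x y : K) : continuous F ->
  cluster (nbhs x) y -> cluster (nbhs (F x)) (F y).
Proof.
move=> cF cl A C nA nC.
have [w [Aw Cw]] := cl _ _ (cF x _ nA) (cF y _ nC).
by exists (F w).
Qed.

Lemma mx_entry_le (t : 'rV[R]_n) j : `|t 0 j| <= `|t|.
Proof.
have -> : `|t| = mx_norm t by [].
rewrite mx_normE -[leLHS]nngE num_le.
exact: (le_bigmax _ (fun i : 'I_1 * 'I_n => `|t i.1 i.2|%:nng) (0, j)).
Qed.

Definition cvec : 'rV[R]_n := const_mx (2^-1).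

Definition phi (eps : R) (t : 'rV[R]_n) : R := (eps - `|t - cvec|) + `|eps - `|t - cvec| |.

Lemma phi_cont eps : continuous (phi eps).
Proof.
move=> t.
have c1 : (fun t : 'rV[R]_n => t - cvec) @ nbhs t --> t - cvec.
  by apply: cvgB; [exact: cvg_id | exact: cvg_cst].
have c2 : (fun t : 'rV[R]_n => `|t - cvec|) @ nbhs t --> `|t - cvec|.
  exact: (cvg_norm c1).
have c3 : (fun t : 'rV[R]_n => eps - `|t - cvec|) @ nbhs t --> eps - `|t - cvec|.
  by apply: cvgB; [exact: cvg_cst | exact: c2].
have c4 : (fun t : 'rV[R]_n => `|eps - `|t - cvec| |) @ nbhs t --> `|eps - `|t - cvec| |.
  exact: (cvg_norm c3).
have c5 : (fun t : 'rV[R]_n => (eps - `|t - cvec|) + `|eps - `|t - cvec| |) @ nbhs t -->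
   (eps - `|t - cvec|) + `|eps - `|t - cvec| |.
  by apply: cvgD; [exact: c3 | exact: c4].
exact: c5.
Qed.

Lemma phi_far eps (t : 'rV[R]_n) : eps <= `|t - cvec| -> phi eps t = 0.
Proof. by move=> h; rewrite /phi ler0_norm ?subrr // subr_le0. Qed.

Lemma phi_c eps : 0 <= eps -> phi eps cvec = eps *+ 2.
Proof. by move=> h; rewrite /phi subrr normr0 subr0 ger0_norm. Qed.

Lemma phi_bd eps (t : 'rV[R]_n) j : eps <= 2^-1 -> (t 0 j = 0 \/ t 0 j = 1) -> phi eps t = 0.
Proof.
move=> he hj; apply: phi_far; apply: le_trans he _.
apply: le_trans (mx_entry_le _ j); rewrite !mxE.
by case: hj => ->; rewrite ?sub0r ?normrN; [rewrite ger0_norm // | rewrite ger0_norm //]; lra.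
Qed.

Lemma chart_fun (g : B -> R) (eps : R) : continuous g -> 0 < eps <= 2^-1 ->
  exists F : K -> R, continuous F /\ forall z, cube z.2 -> F (q z) = g z.1 * phi eps z.2.
Proof.
move=> cg /andP[e0 e1].
pose G (z : B * 'rV[R]_n) := g z.1 * phi eps z.2.
have Gcont : continuous G.
  move=> z; apply: cvgM.
    by apply: (cvg_comp _ _ cvg_fst); exact: cg.
  by apply: (cvg_comp _ _ cvg_snd); exact: phi_cont.
have Gb : forall z w, h_basic hN z w -> G z = G w.
  move=> z [w1 w2] [A [H [/= -> /= ->]]]; rewrite /G /=.
  have [A0|[j jA]] := set_0Vmem A.
    have -> : ind_vec A = 0 by apply/rowP => j; rewrite !mxE A0 inE.
    rewrite hN0; congr (_ * phi eps _); apply/rowP => j; rewrite !mxE A0 inE //.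
  rewrite (@phi_bd eps z.2 j) //; last by right; exact: H.
  rewrite (@phi_bd eps (psi A z.2) j) //; first by rewrite !mulr0.
  by left; rewrite !mxE jA H // subrr.
have Grel : forall z w, h_rel hN z w -> G z = G w.
  move=> z w; elim => [x y /Gb // | x // | x y _ -> // | x y u _ -> _ -> //].
exists (fun k => G (rep k)); split; last first.
  move=> z cz; apply: Grel; apply/q_eq; [exact: rep_cube | exact: cz | exact: rep_q].
apply/continuousP => A oA; apply/q_open.
exists (G @^-1` A); split; first by move/continuousP: Gcont; apply.
apply/seteqP; split => z [h1 h2]; split => //=.
  by rewrite /= (Grel (rep (q z)) z) //; apply/q_eq; [exact: rep_cube | exact: h2 | exact: rep_q].
by move: h2; rewrite /= (Grel (rep (q z)) z) //; apply/q_eq; [exact: rep_cube | exact: h1 | exact: rep_q].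
Qed.


Lemma dense_e (p : B) (N : set B) : nbhs p N -> exists z, N (e z).
Proof.
move=> nN.
have : exists2 W, open_nbhs p W & W `<=` N by move: nN; rewrite nbhsE.
case=> W [oW Wp] WN.
case: He => _ _ _ dE _.
have [x [Wx [z _ ezx]]] := dE W (ex_intro _ p Wp) oW.
by exists z; apply: WN; rewrite ezx.
Qed.

Lemma sep_B (p1 p2 : B) : p1 <> p2 -> exists g : B -> R, continuous g /\ g p1 <> g p2.
Proof.
move=> ne.
have [A [C [nA [nC AC]]]] : exists A C, nbhs p1 A /\ nbhs p2 C /\ ~ (A `&` C !=set0).
  apply: contrapT => H; apply: ne; apply: B_hausdorff => A C nA nC.
  apply: contrapT => h; apply: H; by exists A, C.
pose f (z : 'rV[int]_n) : bool := `[< A (e z) >].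
case: He => _ _ _ _ SC.
have [g' [cg' g'e]] := SC bool bool_compact discrete_hausdorff f.
have key : forall p b, (forall N, nbhs p N -> exists z, N (e z) /\ f z = b) -> g' p = b.
  move=> p b H.
  have nN : nbhs p (g' @^-1` [set g' p]) by apply: cg'; exact: discrete_set1.
  have [z [/= h1 h2]] := H _ nN.
  by rewrite -h2 -h1 -g'e.
have g1 : g' p1 = true.
  apply: key => N nN; have [z [Nz Az]] := dense_e _ _ (filterI nN nA).
  by exists z; split => //; rewrite /f asboolT.
have g2 : g' p2 = false.
  apply: key => N nN; have [z [Nz Cz]] := dense_e _ _ (filterI nN nC).
  exists z; split => //; rewrite /f asboolF // => Az; apply: AC; by exists (e z).
exists (fun p => ((g' p : nat)%:R : R)); split; last by rewrite g1 g2 /=; apply/eqP; rewrite oner_eq0.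
have ch : forall b : bool, (fun b : bool => ((b : nat)%:R : R)) @ nbhs b --> ((b : nat)%:R : R).
  move=> b S nS.
  apply: (@filterS _ (nbhs b) _ [set b]); last exact: discrete_set1.
  by move=> c /= ->; exact: nbhs_singleton.
move=> p; exact: (continuous_comp (cg' p) (ch (g' p))).
Qed.

Lemma cube_cvec : cube cvec.
Proof. by move=> j; rewrite mxE; apply/andP; split; lra. Qed.

Lemma sep_K (k1 k2 : K) : k1 <> k2 -> exists F : K -> R, continuous F /\ F k1 <> F k2.
Proof.
move=> ne.
pose s := cvec - (rep k1).2.
pose p1 := (rep k1).1.
have e1 : sigma s k1 = q (p1, cvec).
  by rewrite /sigma /s addrC subrK -/p1 pi_q //; exact: cube_cvec.
have inv : forall k, sigma (- s) (sigma s k) = k by move=> k; rewrite -sigmaD addNr sigma0.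
have ne' : q (p1, cvec) <> q (rep (sigma s k2)).
  by rewrite rep_q -e1 => /(congr1 (sigma (- s))); rewrite !inv.
suff [F [cF FF]] : exists F : K -> R, continuous F /\ F (q (p1, cvec)) <> F (q (rep (sigma s k2))).
  exists (F \o sigma s); split.
    by move=> k; apply: continuous_comp; [exact: sigma_cont | exact: cF].
  by rewrite /= e1 -(rep_q (sigma s k2)).
set r2 := rep (sigma s k2).
have cr2 : cube r2.2 by exact: rep_cube.
have [r2c|r2c] := eqVneq r2.2 cvec.
  have np : p1 <> r2.1.
    by move=> h; apply: ne'; congr q; rewrite h -r2c /r2; case: (rep (sigma s k2)).
  have [g [cg gne]] := sep_B _ _ np.
  have [F [cF FE]] := @chart_fun g (2^-1) cg ltac:(apply/andP; split; lra).
  exists F; split => //.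
  rewrite FE; last exact: cube_cvec.
  rewrite FE // /= r2c phi_c; last lra.
  move=> h; apply: gne; apply: (mulIf _ h).
  rewrite mulr2n; apply/negP => /eqP; lra.
have nrm : 0 < `|r2.2 - cvec| by rewrite normr_gt0 subr_eq0.
pose eps := Num.min (2^-1) `|r2.2 - cvec|.
have e0 : 0 < eps by rewrite /eps lt_min; apply/andP; split => //; lra.
have e1' : eps <= 2^-1 by rewrite /eps ge_min lexx.
have c1 : continuous (fun _ : B => (1 : R)) by move=> p; exact: cvg_cst.
have [F [cF FE]] := @chart_fun (fun _ => 1) eps c1 ltac:(apply/andP; split => //).
exists F; split => //.
rewrite FE; last exact: cube_cvec.
rewrite FE // /= phi_c; last exact: ltW.
rewrite phi_far; last by rewrite /eps ge_min lexx orbT.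
rewrite mulr0 mul1r => /eqP; rewrite mulrn_eq0 /=; apply/negP; exact: lt0r_neq0.
Qed.

Lemma K_hausdorff : hausdorff_space K.
Proof.
move=> k1 k2 cl; apply: contrapT => ne.
have [F [cF Fne]] := sep_K _ _ ne.
by apply: Fne; apply: Rhausdorff; exact: (@cluster_map _ F k1 k2 cF cl).
Qed.


Lemma nbhs_snd_gen (T U : topologicalType) (p : T * U) (P : set U) :
  nbhs p.2 P -> nbhs p (fun z => P z.2).
Proof.
move=> h; exists (setT, P); first by split => //; exact: filterT.
by move=> [x y] [].
Qed.

Lemma nbhs_fst_gen (T U : topologicalType) (p : T * U) (P : set T) :
  nbhs p.1 P -> nbhs p (fun z => P z.1).
Proof.
move=> h; exists (P, setT); first by split => //; exact: filterT.
by move=> [x y] [].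
Qed.

Lemma Sigma_cont : continuous (fun xz : 'rV[R]_n * (B * 'rV[R]_n) => pi (xz.2.1, xz.2.2 + xz.1)).
Proof.
move=> [x0 z0].
have c1 : (fun xz : 'rV[R]_n * (B * 'rV[R]_n) => xz.2.1) @ nbhs (x0, z0) --> z0.1.
  apply: (cvg_comp _ _ cvg_snd); exact: cvg_fst.
have c2' : (fun xz : 'rV[R]_n * (B * 'rV[R]_n) => xz.2.2) @ nbhs (x0, z0) --> z0.2.
  apply: (cvg_comp _ _ cvg_snd); exact: cvg_snd.
have c2 : (fun xz : 'rV[R]_n * (B * 'rV[R]_n) => xz.2.2 + xz.1) @ nbhs (x0, z0) --> z0.2 + x0.
  by apply: cvgD; [exact: c2' | exact: cvg_fst].
have c : (fun xz : 'rV[R]_n * (B * 'rV[R]_n) => (xz.2.1, xz.2.2 + xz.1)) @ nbhs (x0, z0) -->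
   (z0.1, z0.2 + x0).
  exact: (@cvg_pair _ _ _ _ _ _ _ _ _ _ _ c1 c2).
exact: (continuous_comp c (pi_cont _)).
Qed.

Lemma sigma_joint : continuous (fun xk : 'rV[R]_n * K => sigma xk.1 xk.2).
Proof.
move=> [x0 k0] W nW; apply: contrapT => nP.
set S := fun xk : 'rV[R]_n * K => sigma xk.1 xk.2.
set P := S @^-1` W.
have clos : closure (~` P) (x0, k0).
  move=> C nC; apply: contrapT => h; apply: nP.
  apply: filterS nC => xk Cxk; apply: contrapT => nPxk; apply: h; by exists xk.
pose G := within (~` P) (nbhs (x0, k0)).
have PG : ProperFilter G by exact: within_nbhs_proper.
have GN : forall Q, nbhs (x0, k0) Q -> G Q.
  move=> Q nQ; rewrite /G /within /=; apply: filterS nQ => xk h _; exact: h.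
pose H2 := (fun xk : 'rV[R]_n * K => rep xk.2) @ G.
have PH2 : ProperFilter H2 by exact: fmap_proper_filter.
have H2D : H2 Dset by apply: filterS (@filterT _ G _) => xk _; exact: rep_cube.
have [z [Dz cz]] := @D_compact H2 PH2 H2D.
have qz : k0 = q z.
  apply: K_hausdorff => A C nA nC.
  have : exists2 U, open_nbhs (q z) U & U `<=` C by move: nC; rewrite nbhsE.
  case=> U [oU Uz] UC.
  have [V [oV VD]] := (q_open U).1 oU.
  have Vz : V z.
    have : (Dset `&` (q @^-1` U)) z by split.
    by rewrite -VD => -[].
  have GA : H2 (rep @` A).
    apply: GN; apply: (@nbhs_snd_gen _ _ (x0, k0) (fun k => (rep @` A) (rep k))).
    by apply: filterS nA => k Ak; exists k.
  have [w [[k Ak <-] Vk]] := cz _ _ GA (open_nbhs_nbhs (conj oV Vz)).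
  exists k; split => //; apply: UC.
  have : (V `&` Dset) (rep k) by split => //; exact: rep_cube.
  by rewrite VD => -[_ /=]; rewrite rep_q.
set Sig := fun xz : 'rV[R]_n * (B * 'rV[R]_n) => pi (xz.2.1, xz.2.2 + xz.1).
have SW : nbhs (x0, z) (Sig @^-1` W).
  apply: (Sigma_cont (x0, z)); rewrite /Sig /=.
  by rewrite -(sigma_q x0 z Dz) -qz.
case: SW => -[N1 N2] /= [n1 n2] N12.
pose Y := (fun xk : 'rV[R]_n * K => rep xk.2) @` ((~` P) `&` (fun xk => N1 xk.1)).
have GY : H2 Y.
  rewrite /H2 /=.
  have h1 : G (~` P) by exact: withinT.
  have h2 : G (fun xk : 'rV[R]_n * K => N1 xk.1).
    by apply: GN; exact: (@nbhs_fst_gen _ _ (x0, k0) N1).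
  by apply: filterS (filterI h1 h2) => xk hxk; exists xk.
have [w [[xk [nPxk N1xk] <-] N2w]] := cz _ _ GY n2.
apply: nPxk; rewrite /P /S /=.
have : Sig (xk.1, rep xk.2) \in W by apply/asboolP; apply: N12.
by move/asboolP.
Qed.


Lemma main_result :
  compact [set: K] /\ hausdorff_space K /\
  exists sig : 'rV[R]_n -> K -> K,
    [/\ (forall (x : 'rV[R]_n) (p : B) (i : 'rV[R]_n), cube i ->
           sig x (q (p, i)) =
           q (hN (ipart x + carry x i) p,
              i + fpart x - map_mx (fun z : int => z%:~R) (carry x i))),
        continuous (fun xk : 'rV[R]_n * K => sig xk.1 xk.2),
        (forall k, sig 0 k = k),
        (forall x y k, sig (x + y) k = sig x (sig y k)) &
        closure (range (fun x => sig x (q (e 0, 0)))) = [set: K]].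
Proof.
split; first exact: K_compact.
split; first exact: K_hausdorff.
exists sigma; split.
- exact: sigma_formula.
- exact: sigma_joint.
- exact: sigma0.
- exact: sigmaD.
- exact: orbit_dense.
Qed.

End Main.

Theorem lemma1 (R : realType) (n : nat) (n_ge1 : (1 <= n)%N)
  (B : topologicalType) (e : 'rV[int]_n -> B)
  (hN : 'rV[int]_n -> B -> B)
  (K : topologicalType) (q : B * 'rV[R]_n -> K) :
  is_stone_cech e ->
  (forall N, continuous (hN N)) ->
  (forall N z, hN N (e z) = e (z + N)) ->
  is_h_quotient hN q ->
  compact [set: K] /\ hausdorff_space K /\
  exists sigma : 'rV[R]_n -> K -> K,
    [/\ (forall (x : 'rV[R]_n) (p : B) (i : 'rV[R]_n), cube i ->
           sigma x (q (p, i)) =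
           q (hN (ipart x + carry x i) p,
              i + fpart x - map_mx (fun z : int => z%:~R) (carry x i))),
        continuous (fun xk : 'rV[R]_n * K => sigma xk.1 xk.2),
        (forall k, sigma 0 k = k),
        (forall x y k, sigma (x + y) k = sigma x (sigma y k)) &
        closure (range (fun x => sigma x (q (e 0, 0)))) = [set: K]].
Proof.
move=> He HhN Hhe Hq.
exact: (@main_result R n B e hN K q He HhN Hhe Hq).
Qed.
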